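(* Let $(X,d)$ be $\delta$-hyperbolic with base point $o$, let $\mathcal S$ be a $(1/100,C_0,D)$-Schottky set, and consider the pivotal-time construction below. If $P_n=\{k_1<\dots<k_p\}$ and $D\ge 6C_0+13\delta+1$, then for every $i=2,\dots,p$ the sequence $y^-_{k_i},\,y_{k_i},\,y^-_{n+1}$ is a $(2C_0+5\delta,\ D-6C_0-13\delta)$-chain.
   Context: Gromov product $(x|y)_z=\frac12(d(x,z)+d(z,y)-d(x,y))$. A sequence $x_0,\dots,x_n$ is a $(C,D)$-chain if $(x_{i-1}|x_{i+1})_{x_i}\le C$ for $1\le i\le n-1$ and $d(x_{i-1},x_i)\ge D$ for $1\le i\le n$. For $C\ge0$, $D'=2C+2\delta+1$, the chain shadow $\mathcal{CS}_x(y,C)$ is the set of $z$ for which there is a $(C,D')$-chain $x_0=x,x_1,\dots,x_n=z$ with $(x_0|x_1)_y\le C$. A finite set $\mathcal S$ of isometries is an $(\epsilon,C,D)$-Schottky set if for all $x,y\in X$: $\#\{s:(x|s y)_o\le C\}\ge(1-\epsilon)\#\mathcal S$, $\#\{s:(x|s^{-1}y)_o\le C\}\ge(1-\epsilon)\#\mathcal S$, and $d(o,so)\ge D$ for all $s\in\mathcal S$. Construction: fix isometries $u_0,u_1,\dots$ and elements $s_i=a_ib_i$ with $a_i,b_i\in\mathcal S$. Put $y_n^-=u_0s_1u_1\cdots s_{n-1}u_{n-1}o$, $y_n=u_0s_1u_1\cdots s_{n-1}u_{n-1}a_no$, $y_n^+=u_0s_1u_1\cdots s_{n-1}u_{n-1}a_nb_no$.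 Pivotal times: $P_0=\emptyset$; given $P_{n-1}$ let $k=\max P_{n-1}$ (and $k=0$, $y_0:=o$ if $P_{n-1}=\emptyset$). If the local geodesic condition $(y_k|y_n)_{y_n^-}\le C_0$, $(y_n^-|y_n^+)_{y_n}\le C_0$, $(y_n|y_{n+1}^-)_{y_n^+}\le C_0$ holds, set $P_n=P_{n-1}\cup\{n\}$; otherwise let $m$ be the largest element of $P_{n-1}$ with $y^-_{n+1}\in\mathcal{CS}_{y_m}(y_m^+,C_0+\delta)$ and set $P_n=P_{n-1}\cap\{1,\dots,m\}$ ($P_n=\emptyset$ if no such $m$). *)

(* Defs.v *)
From HB Require Import structures.
From mathcomp Require Import all_boot all_order all_algebra.
From mathcomp Require Import boolp reals.
Set Implicit Arguments. Unset Strict Implicit. Unset Printing Implicit Defensive.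
Import Order.TTheory GRing.Theory Num.Theory.
Local Open Scope ring_scope.

Definition gp (R : realType) (X : Type) (d : X -> X -> R) (x y z : X) : R :=
  (d x z + d z y - d x y) / 2.

Definition metric (R : realType) (X : Type) (d : X -> X -> R) : Prop :=
  [/\ (forall x, d x x = 0),
      (forall x y, d x y = d y x),
      (forall x y z, d x z <= d x y + d y z)
    & (forall x y, d x y = 0 -> x = y)].

Definition hyperbolic (R : realType) (X : Type) (d : X -> X -> R) (delta : R)
  : Prop :=
  0 <= delta /\
  forall x y z w, Num.min (gp d x y w) (gp d y z w) - delta <= gp d x z w.

Definition is_isom (R : realType) (X : Type) (d : X -> X -> R) (f : X -> X)
  : Prop :=
  (forall x y, d (f x) (f y) = d x y) /\ bijective f.

Definition is_chain (R : realType) (X : Type) (d : X -> X -> R) (C D : R)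
  (c : nat -> X) (m : nat) : Prop :=
  (forall i, (0 < i < m)%N -> gp d (c i.-1) (c i.+1) (c i) <= C) /\
  (forall i, (0 < i <= m)%N -> D <= d (c i.-1) (c i)).

Definition chain_shadow (R : realType) (X : Type) (d : X -> X -> R) (delta : R)
  (x y : X) (C : R) (z : X) : Prop :=
  exists (c : nat -> X) (m : nat),
    [/\ (0 < m)%N, c 0%N = x, c m = z,
        is_chain d C (2 * C + 2 * delta + 1) c m
      & gp d (c 0%N) (c 1%N) y <= C].

(** (eps, C, D)-Schottky set: the finite set { S i | i : I } (S injective),
    with Sinv i the inverse isometry of S i. *)
Definition schottky (R : realType) (X : Type) (d : X -> X -> R) (o : X)
  (I : finType) (S Sinv : I -> X -> X) (eps C D : R) : Prop :=
  [/\ (forall x y, (1 - eps) * #|I|%:R <= #|[pred i | gp d x (S i y) o <= C]|%:R),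
      (forall x y, (1 - eps) * #|I|%:R <= #|[pred i | gp d x (Sinv i y) o <= C]|%:R)
    & (forall i, D <= d o (S i o))].

(** pre k = u_0 s_1 u_1 ... s_k u_k, with s_j = a_j b_j. *)
Fixpoint pre (X : Type) (I : Type) (S : I -> X -> X) (a b : nat -> I)
  (u : nat -> X -> X) (k : nat) : X -> X :=
  match k with
  | 0 => u 0%N
  | k'.+1 => fun x => pre S a b u k' (S (a k) (S (b k) (u k x)))
  end.

(** y_n^- , y_n , y_n^+  (meaningful for n >= 1). *)
Definition ym X I (S : I -> X -> X) a b u (o : X) (n : nat) : X :=
  pre S a b u n.-1 o.
Definition yy X I (S : I -> X -> X) a b u (o : X) (n : nat) : X :=
  pre S a b u n.-1 (S (a n) o).
Definition yp X I (S : I -> X -> X) a b u (o : X) (n : nat) : X :=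
  pre S a b u n.-1 (S (a n) (S (b n) o)).

Fixpoint piv (R : realType) (X : Type) (d : X -> X -> R) (delta C0 : R) (o : X)
  (I : Type) (S : I -> X -> X) (a b : nat -> I) (u : nat -> X -> X) (n : nat)
  : seq nat :=
  match n with
  | 0 => [::]
  | n'.+1 =>
    let P := piv d delta C0 o S a b u n' in
    let k := foldr maxn 0%N P in
    let yk := if k == 0%N then o else yy S a b u o k in
    if [&& gp d yk (yy S a b u o n) (ym S a b u o n) <= C0,
           gp d (ym S a b u o n) (yp S a b u o n) (yy S a b u o n) <= C0
         & gp d (yy S a b u o n) (ym S a b u o n.+1) (yp S a b u o n) <= C0]
    then rcons P n
    else
      let cand := [seq m <- P |
        `[< chain_shadow d delta (yy S a b u o m) (yp S a b u o m) (C0 + delta)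
                         (ym S a b u o n.+1) >]] in
      let m := foldr maxn 0%N cand in
      [seq j <- P | (0 < j <= m)%N]
  end.

(* Main.v *)
Require Import Defs.
From HB Require Import structures.
From mathcomp Require Import all_boot all_order all_algebra.
From mathcomp Require Import boolp reals.
From mathcomp Require Import lra zify.
Import Order.TTheory GRing.Theory Num.Theory.
Local Open Scope ring_scope.
Set Implicit Arguments.

Lemma gpC (R : realType) (X : Type) (d : X -> X -> R) x y z :
  metric d -> gp d x y z = gp d y x z.
Proof. case=> _ ds _ _; rewrite /gp; rewrite (ds x y) (ds x z) (ds z y); lra. Qed.

Lemma gp_le (R : realType) (X : Type) (d : X -> X -> R) x y z :
  metric d -> gp d x y z <= d z y.
Proof. case=> _ ds tr _; rewrite /gp; have := tr x y z; rewrite (ds y z) (ds x z); lra. Qed.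

Lemma gp_sum (R : realType) (X : Type) (d : X -> X -> R) x y w :
  metric d -> gp d w y x + gp d x w y = d x y.
Proof. case=> _ ds _ _; rewrite /gp (ds w x) (ds y w); lra. Qed.

Lemma hyp_key (R : realType) (X : Type) (d : X -> X -> R) delta x y z w K :
  hyperbolic d delta -> gp d x z w <= K -> K + delta < gp d y z w ->
  gp d x y w <= K + delta.
Proof.
case=> _ h hx hy; have := h x y z w.
rewrite leNgt; case: (ltP (K + delta) (gp d x y w)) => // H.
have : K + delta < Num.min (gp d x y w) (gp d y z w) by rewrite lt_min H hy.
move=> H2 H3; exfalso; move/negP: H3; apply; rewrite ltrBrDr.
apply: le_lt_trans H2; lra.
Qed.


Lemma chain_gp (R : realType) (X : Type) (d : X -> X -> R) delta C Dd c m :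
  metric d -> hyperbolic d delta -> C + delta + (C + delta) < Dd ->
  is_chain d C Dd c m -> forall j, (0 < j < m)%N ->
  gp d (c j.-1) (c m) (c j) <= C + delta.
Proof.
move=> hm hh hD [hc hdist] j /andP[hj hjm].
have hdel : 0 <= delta by case: hh.
suff H : forall k j, (0 < j)%N -> (j + k.+1 = m)%N -> gp d (c j.-1) (c m) (c j) <= C + delta.
  by apply: (H (m - j.+1)%N) => //; lia.
elim=> [|k IH] {hj hjm} j hj e.
  have -> : m = j.+1 by lia.
  have := hc j ltac:(lia); rewrite /=; lra.
have h1 := IH j.+1 isT ltac:(lia).
have h2 := gp_sum (c j) (c j.+1) (c m) hm.
have h3 := hdist j.+1 ltac:(lia); rewrite /= in h3.
have h4 := hc j ltac:(lia).
apply: (hyp_key (c j.-1) (c m) (c j.+1) (c j) C hh h4); rewrite /= in h1; lra.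
Qed.

Lemma chain_rev (R : realType) (X : Type) (d : X -> X -> R) C Dd c m :
  metric d -> is_chain d C Dd c m -> is_chain d C Dd (fun i => c (m - i)%N) m.
Proof.
move=> hm [hc hdist]; split.
  move=> i hi; have := hc (m - i)%N ltac:(lia).
  have -> : (m - i.-1 = (m - i).+1)%N by lia.
  have -> : (m - i.+1 = (m - i).-1)%N by lia.
  by rewrite gpC.
move=> i hi; have := hdist (m - i).+1 ltac:(lia).
have -> : (m - i.-1 = (m - i).+1)%N by lia.
by case: hm => _ ds _ _; rewrite ds.
Qed.

Lemma chain_gp_rev (R : realType) (X : Type) (d : X -> X -> R) delta C Dd c m :
  metric d -> hyperbolic d delta -> C + delta + (C + delta) < Dd ->
  is_chain d C Dd c m -> (1 < m)%N ->
  gp d (c 0%N) (c m) (c m.-1) <= C + delta.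
Proof.
move=> hm hh hD hc h1.
have := chain_gp hm hh hD (chain_rev hm hc) 1 ltac:(lia).
rewrite /= subn0 subnn subn1 gpC //.
Qed.

Definition glue (X : Type) (c e : nat -> X) (m : nat) (j : nat) : X :=
  if (j <= m)%N then c j else e (j - m)%N.

Lemma glue_ge (X : Type) (c e : nat -> X) m j :
  c m = e 0%N -> (m <= j)%N -> glue c e m j = e (j - m)%N.
Proof.
move=> ce hj; rewrite /glue; case: leqP => h //.
have -> : j = m by lia. by rewrite subnn.
Qed.

Lemma glue_le (X : Type) (c e : nat -> X) m j :
  (j <= m)%N -> glue c e m j = c j.
Proof. by move=> hj; rewrite /glue hj. Qed.

Lemma glue_chain (R : realType) (X : Type) (d : X -> X -> R) C Dd c e m l :
  is_chain d C Dd c m -> is_chain d C Dd e l -> c m = e 0%N ->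
  (0 < m)%N -> (0 < l)%N -> gp d (c m.-1) (e 1%N) (c m) <= C ->
  is_chain d C Dd (glue c e m) (m + l).
Proof.
move=> [hc hdc] [he hde] ce hm hl hj; split.
  move=> i hi; case: (ltngtP i m) => him.
  - rewrite (glue_le c e m i.-1) ?(glue_le c e m i.+1) ?(glue_le c e m i); try lia.
    apply: hc; lia.
  - rewrite (glue_ge c e m i.-1 ce) ?(glue_ge c e m i.+1 ce) ?(glue_ge c e m i ce) //; try lia.
    have -> : (i.-1 - m = (i - m).-1)%N by lia.
    have -> : (i.+1 - m = (i - m).+1)%N by lia.
    apply: he; lia.
  - subst i; rewrite (glue_le c e m m.-1) ?(glue_le c e m m) ?(glue_ge c e m m.+1 ce) //; try lia.
    by have -> : (m.+1 - m = 1)%N by lia.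
move=> i hi; case: (leqP i m) => him.
  rewrite (glue_le c e m i.-1) ?(glue_le c e m i); try lia.
  apply: hdc; lia.
rewrite (glue_ge c e m i ce) //; last lia.
case: (i.-1 =P m) => e1.
  rewrite e1 (glue_le c e m m) // ce.
  have -> : (i - m = 1)%N by lia. by have := hde 1%N ltac:(lia).
rewrite (glue_ge c e m i.-1 ce) //; last lia.
have -> : (i.-1 - m = (i - m).-1)%N by lia.
apply: hde; lia.
Qed.

Lemma two_chain (R : realType) (X : Type) (d : X -> X -> R) C Dd x y :
  Dd <= d x y -> is_chain d C Dd (fun j => if j == 0%N then x else y) 1.
Proof.
move=> h; split; first by move=> i; lia.
by move=> i hi; have -> : i = 1%N by lia.
Qed.


Lemma joint (R : realType) (X : Type) (d : X -> X -> R) delta C0 D A B Cc w1 :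
  metric d -> hyperbolic d delta -> 0 <= C0 -> 6 * C0 + 13 * delta + 1 <= D ->
  gp d A Cc B <= C0 -> D <= d B Cc -> gp d B w1 Cc <= C0 + delta ->
  gp d A w1 B <= C0 + delta /\ D - (C0 + delta) <= d B w1.
Proof.
move=> hm hh hC hD h1 h2 h3.
have hdel : 0 <= delta by case: hh.
have e := gp_sum B Cc w1 hm.
have l := gp_le Cc w1 B hm; rewrite gpC // in l.
split; last lra.
apply: (hyp_key A w1 Cc B C0 hh h1); lra.
Qed.
Arguments joint {R X d delta C0 D A B Cc w1}.

Definition pairch (R : realType) (X : Type) (d : X -> X -> R) delta C0
  (x0 y0 A' B' : X) : Prop :=
  exists c M, [/\ (1 < M)%N, c 0%N = x0, c M.-1 = A', c M = B' &
    is_chain d (C0 + delta) (2 * (C0 + delta) + 2 * delta + 1) c M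
    /\ gp d (c 0%N) (c 1%N) y0 <= C0 + delta].
Arguments pairch {R X}.

Lemma GL (R : realType) (X : Type) (d : X -> X -> R) delta C0 D
  (p q : nat -> X) M2 L A' B' C' :
  metric d -> hyperbolic d delta -> 0 <= C0 -> 6 * C0 + 13 * delta + 1 <= D ->
  is_chain d (C0 + delta) (2 * (C0 + delta) + 2 * delta + 1) p M2 ->
  is_chain d (C0 + delta) (2 * (C0 + delta) + 2 * delta + 1) q L ->
  (1 < M2)%N -> (0 < L)%N -> p M2.-1 = A' -> p M2 = B' -> q 0%N = B' ->
  gp d (q 0%N) (q 1%N) C' <= C0 + delta ->
  gp d A' C' B' <= C0 -> D <= d B' C' ->
  [/\ is_chain d (C0 + delta) (2 * (C0 + delta) + 2 * delta + 1) (glue p q M2) (M2 + L),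
      glue p q M2 0%N = p 0%N, glue p q M2 1%N = p 1%N &
      forall j, glue p q M2 (M2 + j)%N = q j].
Proof.
move=> hm hh hC hD hp hq hM hL pA pB qB hq1 hA hBC.
have pq : p M2 = q 0%N by rewrite pB qB.
split.
- apply: glue_chain => //; first lia.
  rewrite pA pB; rewrite qB in hq1.
  by case: (joint hm hh hC hD hA hBC hq1).
- by rewrite glue_le.
- by rewrite glue_le //; lia.
- by move=> j; rewrite glue_ge // ?addKn //; lia.
Qed.
Arguments GL {R X d delta C0 D p q M2 L A' B' C'}.

Lemma PP (R : realType) (X : Type) (d : X -> X -> R) delta C0 D x0 y0 A' B' C' A'' B'' :
  metric d -> hyperbolic d delta -> 0 <= C0 -> 6 * C0 + 13 * delta + 1 <= D ->
  pairch d delta C0 x0 y0 A' B' -> pairch d delta C0 B' C' A'' B'' ->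
  gp d A' C' B' <= C0 -> D <= d B' C' -> pairch d delta C0 x0 y0 A'' B''.
Proof.
move=> hm hh hC hD [p [M2 [h1 h2 h3 h4 [h5 h6]]]] [q [L [k1 k2 k3 k4 [k5 k6]]]] hA hBC.
have [g1 g2 g3 g4] := GL hm hh hC hD h5 k5 h1 ltac:(lia) h3 h4 k2 k6 hA hBC.
exists (glue p q M2), (M2 + L)%N; split.
- lia.
- by rewrite g2.
- have -> : ((M2 + L).-1 = M2 + L.-1)%N by lia. by rewrite g4.
- by rewrite g4.
- by split=> //; rewrite g2 g3.
Qed.
Arguments PP {R X d delta C0 D x0 y0 A' B' C' A'' B''}.

Lemma PC (R : realType) (X : Type) (d : X -> X -> R) delta C0 D x0 y0 A' B' C' Z :
  metric d -> hyperbolic d delta -> 0 <= C0 -> 6 * C0 + 13 * delta + 1 <= D ->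
  pairch d delta C0 x0 y0 A' B' -> chain_shadow d delta B' C' (C0 + delta) Z ->
  gp d A' C' B' <= C0 -> D <= d B' C' -> chain_shadow d delta x0 y0 (C0 + delta) Z.
Proof.
move=> hm hh hC hD [p [M2 [h1 h2 h3 h4 [h5 h6]]]] [q [L [k1 k2 k3 k5 k6]]] hA hBC.
have [g1 g2 g3 g4] := GL hm hh hC hD h5 k5 h1 k1 h3 h4 k2 k6 hA hBC.
exists (glue p q M2), (M2 + L)%N; split.
- lia.
- by rewrite g2.
- by rewrite g4.
- done.
- by rewrite g2 g3.
Qed.
Arguments PC {R X d delta C0 D x0 y0 A' B' C' Z}.

Lemma FIN (R : realType) (X : Type) (d : X -> X -> R) delta C0 D (o A B Cc Z : X) :
  metric d -> hyperbolic d delta -> 0 <= C0 -> 6 * C0 + 13 * delta + 1 <= D ->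
  chain_shadow d delta B Cc (C0 + delta) Z ->
  gp d A Cc B <= C0 -> D <= d A B -> D <= d B Cc ->
  is_chain d (2 * C0 + 5 * delta) (D - 6 * C0 - 13 * delta)
    (fun j => nth o [:: A; B; Z] j) 2.
Proof.
move=> hm hh hC hD [w [M [k1 k2 k3 k5 k6]]] hA hAB hBC.
have hdel : 0 <= delta by case: hh.
rewrite k2 in k6.
have [j1 j2] := joint hm hh hC hD hA hBC k6.
set two := fun j => if j == 0%N then A else B.
have t2 : is_chain d (C0 + delta) (2 * (C0 + delta) + 2 * delta + 1) two 1.
  by apply: two_chain; lra.
have hc := glue_chain t2 k5 (esym k2) isT k1 j1.
have hlt : C0 + delta + delta + (C0 + delta + delta) < 2 * (C0 + delta) + 2 * delta + 1 by lra.
have g1 := chain_gp hm hh hlt hc 1 ltac:(lia).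
rewrite /= /glue /= in g1.
have e1 : ((1 + M) - 1 = M)%N by lia.
rewrite e1 in g1.
rewrite k3 in g1.
have e2 : (1 + M <= 1)%N = false by lia.
rewrite e2 /two /= in g1.
split.
  move=> i hi; have -> : i = 1%N by lia.
  rewrite /=; lra.
move=> i hi; case: i hi => [|[|[|i]]] //= _.
  lra.
case: (M =P 1%N) => eM.
  subst M; rewrite -k3; lra.
have g2 := chain_gp hm hh hlt k5 1 ltac:(lia).
rewrite /= k3 k2 in g2.
have ee : gp d B Z (w 1%N) = (d B (w 1%N) + d (w 1%N) Z - d B Z) / 2 by [].
have l := gp_le B Z (w 1%N) hm.
lra.
Qed.


Lemma mx_ge (s : seq nat) x : x \in s -> leq x (foldr maxn 0 s).
Proof.
elim: s => //= y s IH; rewrite inE => /orP[/eqP->|/IH h]; first exact: leq_maxl.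
exact: leq_trans h (leq_maxr _ _).
Qed.

Lemma mx_mem (s : seq nat) : leq 1 (foldr maxn 0 s) -> foldr maxn 0 s \in s.
Proof.
elim: s => // y s IH.
change (foldr maxn 0 (y :: s)) with (maxn y (foldr maxn 0 s)).
have [h|h] := leqP y (foldr maxn 0 s).
  move=> hp; by rewrite inE IH ?orbT.
by rewrite inE eqxx.
Qed.

Lemma mx_le (s : seq nat) m : (forall x, x \in s -> leq x m) -> leq (foldr maxn 0 s) m.
Proof.
elim: s => // y s IH h.
change (foldr maxn 0 (y :: s)) with (maxn y (foldr maxn 0 s)).
rewrite geq_max h ?inE ?eqxx //= IH // => x hx.
by apply: h; rewrite inE hx orbT.
Qed.

Arguments mx_ge {s x}.
Arguments mx_mem {s}.
Arguments mx_le {s m}.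

Definition Inv (R : realType) (X : Type) (d : X -> X -> R) (delta C0 : R) (o : X)
  (I : Type) (S : I -> X -> X) (a b : nat -> I) (u : nat -> X -> X) (n : nat)
  (P : seq nat) : Prop :=
 [/\ forall k, k \in P -> (0 < k <= n)%N,
     forall k k', k \in P -> k' \in P -> (k < k')%N ->
       pairch d delta C0 (yy S a b u o k) (yp S a b u o k) (ym S a b u o k') (yy S a b u o k'),
     leq 1 (foldr maxn 0 P) -> chain_shadow d delta (yy S a b u o (foldr maxn 0 P))
        (yp S a b u o (foldr maxn 0 P)) (C0 + delta) (ym S a b u o n.+1)
   & forall k, k \in P -> gp d (ym S a b u o k) (yp S a b u o k) (yy S a b u o k) <= C0].
Arguments Inv {R X} d delta C0 o {I} S a b u n P.

Lemma inv_all (R : realType) (X : Type) (d : X -> X -> R) (delta C0 D : R) (o : X)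
  (I : Type) (S : I -> X -> X) (a b : nat -> I) (u : nat -> X -> X) :
  metric d -> hyperbolic d delta -> 0 <= C0 -> 6 * C0 + 13 * delta + 1 <= D ->
  (forall k, D <= d (ym S a b u o k) (yy S a b u o k)) ->
  (forall k, D <= d (yy S a b u o k) (yp S a b u o k)) ->
  forall n, Inv d delta C0 o S a b u n (piv d delta C0 o S a b u n).
Proof.
move=> hm hh hC hD dAB dBC.
have hdel : 0 <= delta by case: hh.
have hds : forall x y, d x y = d y x by case: hm.
elim=> [|n IH]; first by split.
cbn [piv].
case: IH => Ia Ib Ic Id.
set P' := piv d delta C0 o S a b u n in Ia Ib Ic Id *.
set K' := foldr maxn 0 P' in Ic *.
case: ifP => hcond.
- move/and3P: hcond => [h1 h2 h3].
  have top : foldr maxn 0 (rcons P' n.+1) = n.+1.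
    apply/eqP; rewrite eqn_leq; apply/andP; split.
      apply: mx_le => x; rewrite mem_rcons inE => /orP[/eqP->//|/Ia]; lia.
    by apply: mx_ge; rewrite mem_rcons inE eqxx.
  have key : forall k, k \in P' -> pairch d delta C0 (yy S a b u o k) (yp S a b u o k)
                 (ym S a b u o n.+1) (yy S a b u o n.+1).
    move=> k kP.
    have hkK : (k <= K')%N := mx_ge kP.
    have hK : (0 < K')%N by have := Ia k kP; lia.
    have KP : K' \in P' := mx_mem hK.
    have [c [M [m0 c0 cM cch cgp]]] := Ic hK.
    rewrite -/K' in c0 cgp.
    have hK0 : (K' == 0) = false by apply/eqP => e; move: hK; rewrite e.
    rewrite hK0 in h1.
    have hj : gp d (c M.-1) (yy S a b u o n.+1) (c M) <= C0 + delta.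
      case: (M =P 1%N) => eM.
        by rewrite eM /= in cM *; rewrite c0 cM; lra.
      have hlt : C0 + delta + delta + (C0 + delta + delta) < 2 * (C0 + delta) + 2 * delta + 1 by lra.
      have g := chain_gp_rev hm hh hlt cch ltac:(lia).
      have e := gp_sum (c M) (c M.-1) (c 0%N) hm.
      have dd := cch.2 M ltac:(lia).
      rewrite hds in dd.
      rewrite c0 cM in g e dd *.
      rewrite gpC //.
      apply: (hyp_key (yy S a b u o n.+1) (c M.-1) (yy S a b u o K') (ym S a b u o n.+1) C0 hh).
        by rewrite gpC.
      have g2 := gpC (ym S a b u o n.+1) (yy S a b u o K') (c M.-1) hm.
      rewrite gpC //; lra.
    set two := fun j => if j == 0%N then ym S a b u o n.+1 else yy S a b u o n.+1.
    have t2 : is_chain d (C0 + delta) (2 * (C0 + delta) + 2 * delta + 1) two 1.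
      apply: two_chain; have := dAB n.+1; lra.
    have gc := glue_chain cch t2 cM m0 isT hj.
    have pK : pairch d delta C0 (yy S a b u o K') (yp S a b u o K') (ym S a b u o n.+1) (yy S a b u o n.+1).
      exists (glue c two M), (M + 1)%N; split.
      + lia.
      + by rewrite glue_le.
      + by rewrite addn1 /= glue_le.
      + rewrite (glue_ge c two M (M + 1) cM); last lia.
        by have -> : (M + 1 - M = 1)%N by lia.
      + split => //; rewrite glue_le // glue_le //.
    case: (k =P K') => ekK; first by rewrite ekK.
    have kK : (k < K')%N by lia.
    exact: (PP hm hh hC hD (Ib k K' kP KP kK) pK (Id K' KP) (dBC K')).
  rewrite /Inv top; split.
  + by move=> k; rewrite mem_rcons inE => /orP[/eqP->|/Ia]; lia.
  + move=> k k'; rewrite !mem_rcons !inE.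
    case/orP=> [/eqP-> | kP]; case/orP=> [/eqP-> | k'P] hkk; try lia.
    * by have := Ia k' k'P; lia.
    * exact: key.
    * exact: Ib.
  + move=> _.
    exists (fun j => if j == 0%N then yy S a b u o n.+1 else ym S a b u o n.+2), 1%N.
    split => //.
      apply: two_chain.
      have ee : gp d (yy S a b u o n.+1) (ym S a b u o n.+2) (yp S a b u o n.+1) =
        (d (yy S a b u o n.+1) (yp S a b u o n.+1) + d (yp S a b u o n.+1) (ym S a b u o n.+2)
         - d (yy S a b u o n.+1) (ym S a b u o n.+2)) / 2 by [].
      have l := gp_le (yy S a b u o n.+1) (ym S a b u o n.+2) (yp S a b u o n.+1) hm.
      have := dBC n.+1; lra.
    rewrite /=; lra.
  + by move=> k; rewrite mem_rcons inE => /orP[/eqP->|/Id].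
- set cand := [seq m <- P' | `[< _ >]].
  set m := foldr maxn 0 cand.
  split.
  + move=> k; rewrite mem_filter => /andP[_ /Ia]; lia.
  + move=> k k'; rewrite !mem_filter => /andP[_ kP] /andP[_ k'P]; exact: Ib.
  + move=> hp.
    have hm0 : (0 < m)%N.
      case: (posnP m) => // e0; move: hp.
      have : leq (foldr maxn 0 [seq j <- P' | (0 < j <= m)%N]) 0.
        apply: mx_le => x; rewrite mem_filter e0; lia.
      lia.
    have mc : m \in cand := mx_mem hm0.
    move: mc; rewrite mem_filter => /andP[/asboolP hcs mP].
    have -> : foldr maxn 0 [seq j <- P' | (0 < j <= m)%N] = m.
      apply/eqP; rewrite eqn_leq; apply/andP; split.
        by apply: mx_le => x; rewrite mem_filter; lia.
      by apply: mx_ge; rewrite mem_filter mP hm0 leqnn.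
    exact: hcs.
  + move=> k; rewrite mem_filter => /andP[_ /Id] //.
Qed.

Unset Implicit Arguments.

Lemma pre_iso (R : realType) (X : Type) (d : X -> X -> R) (I : Type)
  (S : I -> X -> X) (a b : nat -> I) (u : nat -> X -> X) :
  (forall i, is_isom d (S i)) -> (forall k, is_isom d (u k)) ->
  forall k x y, d (pre S a b u k x) (pre S a b u k y) = d x y.
Proof.
move=> hS hu; elim=> [|k IH] x y /=; first by case: (hu 0%N).
by rewrite IH (hS _).1 (hS _).1 (hu _).1.
Qed.

Theorem lemma5p2 (R : realType) (X : Type) (d : X -> X -> R) (delta : R) (o : X)
  (I : finType) (S Sinv : I -> X -> X) (C0 D : R)
  (u : nat -> X -> X) (a b : nat -> I) (n : nat) :
  metric d -> hyperbolic d delta ->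
  (forall i, is_isom d (S i)) -> injective S ->
  (forall i, cancel (S i) (Sinv i) /\ cancel (Sinv i) (S i)) ->
  0 <= C0 ->
  schottky d o S Sinv (1 / 100) C0 D ->
  (forall k, is_isom d (u k)) ->
  6 * C0 + 13 * delta + 1 <= D ->
  forall k, k \in piv d delta C0 o S a b u n ->
  (exists2 k', k' \in piv d delta C0 o S a b u n & (k' < k)%N) ->
  is_chain d (2 * C0 + 5 * delta) (D - 6 * C0 - 13 * delta)
    (fun j => nth o [:: ym S a b u o k; yy S a b u o k; ym S a b u o n.+1] j) 2.
Proof.
move=> hm hh hS _ _ hC hsch hu hD k kP _.
case: hsch => _ _ hs.
have dAB : forall k, D <= d (ym S a b u o k) (yy S a b u o k).
  by move=> j; rewrite /ym /yy (@pre_iso _ _ d _ S a b u hS hu); apply: hs.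
have dBC : forall k, D <= d (yy S a b u o k) (yp S a b u o k).
  by move=> j; rewrite /yp /yy (@pre_iso _ _ d _ S a b u hS hu) (hS _).1; apply: hs.
have [Ia Ib Ic Id] := @inv_all _ _ d delta C0 D o _ S a b u hm hh hC hD dAB dBC n.
set K := foldr maxn 0 (piv d delta C0 o S a b u n) in Ic.
have hkK : (k <= K)%N := mx_ge kP.
have hk0 := Ia k kP.
have hK : (0 < K)%N by lia.
have KP : K \in piv d delta C0 o S a b u n := mx_mem hK.
have cs : chain_shadow d delta (yy S a b u o k) (yp S a b u o k) (C0 + delta) (ym S a b u o n.+1).
  case: (k =P K) => e; first by rewrite e; exact: Ic hK.
  exact: (PC hm hh hC hD (Ib k K kP KP ltac:(lia)) (Ic hK) (Id K KP) (dBC K)).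
exact: (@FIN _ _ d delta C0 D o _ _ _ _ hm hh hC hD cs (Id k kP) (dAB k) (dBC k)).
Qed.
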